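(* Let $(\varphi_\alpha)_{\alpha>0}$ be a non-linear regularizing filter satisfying Assumption C with parameter $\gamma$ and numbers $\ell_\alpha\in(0,1)$. Then the family $(\operatorname{prox}_{\gamma\mathcal{R}_\alpha})_{\alpha>0}$ of operators on $\ell^2(\Lambda)$ is an admissible family of denoisers.
   Context: $\Lambda$ is an at most countable index set and $\kappa=(\kappa_\lambda)_{\lambda\in\Lambda}\in(0,\infty)^\Lambda$ with $\sup_\lambda\kappa_\lambda<\infty$. A non-linear regularizing filter is a family $(\varphi_\alpha)_{\alpha>0}$ of functions $\varphi_\alpha\colon(0,\infty)\times\mathbb{R}\to\mathbb{R}$ such that for all $\alpha,\kappa>0$: (F1) $\varphi_\alpha(\kappa,\cdot)$ is non-decreasing; (F2) $\varphi_\alpha(\kappa,\cdot)$ is 1-Lipschitz; (F3) $\varphi_\alpha(\kappa,0)=0$; (F4) $\lim_{\alpha\to0}\varphi_\alpha(\kappa,c)=c$ for all $c\in\mathbb{R}$. $\kappa$-regularizer: for each $\alpha>0,\lambda\in\Lambda$ let $s_{\alpha,\lambda}\colon\mathbb{R}\to\mathbb{R}\cup\{\infty\}$ be proper, convex, lower semi-continuous with $s_{\alpha,\lambda}\ge s_{\alpha,\lambda}(0)=0$ and $\varphi_\alpha(\kappa_\lambda,\cdot)=\operatorname{prox}_{s_{\alpha,\lambda}}$ (such functions exist); $\mathcal{R}_\alpha((x_\lambda)_\lambda):=\sum_\lambda s_{\alpha,\lambda}(\kappa_\lambda x_\lambda)$ on $\ell^2(\Lambda)$. $\operatorname{prox}_f(x)=\operatorname{argmin}_y\tfrac12\|x-y\|^2+f(y)$.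 Assumption C: $\gamma\in(0,1/\sup_\lambda\kappa_\lambda^2)$ and for every $\alpha>0$ there is $\ell_\alpha\in(0,1)$ such that (C1) for all $\lambda$, $\varphi_\alpha(\kappa_\lambda,\cdot)$ is Lipschitz with constant at most $\frac{\gamma\kappa_\lambda^2\ell_\alpha}{1-\ell_\alpha(1-\gamma\kappa_\lambda^2)}$; (C2) there exists a constant $C\in[1,\infty)$ such that for all $\alpha>0$ with $1/(1-\ell_\alpha)\ge C$, all $\lambda\in\Lambda$ and all $x\in\mathbb{R}$: $|\varphi_\alpha(\kappa_\lambda,x)|\ge\frac{\gamma\kappa_\lambda^2(1-C(1-\ell_\alpha))}{1-(1-C(1-\ell_\alpha))(1-\gamma\kappa_\lambda^2)}|x|$. Admissible family of denoisers: a family $(\mathbf{D}_\alpha)_{\alpha>0}$ of operators $\mathbf{D}_\alpha\colon H\to H$ on a Hilbert space $H$ such that, with $\mathbb{E}:=\bigcup_{\alpha>0}\operatorname{ran}(\mathbf{D}_\alpha)$: (D1) $\operatorname{Lip}(\mathbf{D}_\alpha)<1$ for all $\alpha>0$; (D2) $\mathbf{D}_\alpha(x)\to x$ as $\alpha\to0$ for all $x\in\mathbb{E}$; (D3) for every bounded $B\subseteq\mathbb{E}$ and every $z\in H$, $\sup_{x\in B}\langle\mathbf{D}_\alpha(x)-x,z\rangle\to0$ as $\alpha\to0$; (D4) for every $x\in\mathbb{E}$ there is $M_x<\infty$ with $\|x-\mathbf{D}_\alpha(x)\|/(1-\operatorname{Lip}(\mathbf{D}_\alpha))\le M_x$ for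 all $\alpha>0$. Here $\operatorname{Lip}$ denotes the optimal Lipschitz constant. *)

(* Defs.v *)
From HB Require Import structures.
From mathcomp Require Import all_boot all_order all_algebra.
From mathcomp Require Import all_classical all_reals all_analysis.
Set Implicit Arguments. Unset Strict Implicit. Unset Printing Implicit Defensive.
Import Order.TTheory GRing.Theory Num.Theory.
Import numFieldNormedType.Exports.
Local Open Scope classical_set_scope.
Local Open Scope ring_scope.

Section Defs.
Context {R : realType} {Lam : countType}.

(* non-linear regularizing filter: phi alpha kappa x ; (F1)-(F4) *)
Definition nl_reg_filter (phi : R -> R -> R -> R) : Prop :=
  forall a k : R, 0 < a -> 0 < k ->
    (forall x y, x <= y -> phi a k x <= phi a k y) /\
    (forall x y, `|phi a k x - phi a k y| <= `|x - y|) /\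
    phi a k 0 = 0 /\
    (forall c : R, (fun b => phi b k c) @ 0^'+ --> c).

Definition econvex (f : R -> \bar R) : Prop :=
  forall (t a b : R), (0 <= t <= 1)%R ->
    (f (t * a + (1 - t) * b)%R <= t%:E * f a + (1 - t)%:E * f b)%E.

Definition elsc (f : R -> \bar R) : Prop :=
  forall (x c : R), (c%:E < f x)%E -> \forall y \near x, (c%:E < f y)%E.

Definition eproper (f : R -> \bar R) : Prop :=
  (forall x, f x != -oo%E) /\ exists x, f x \is a fin_num.

Definition is_prox1 (f : R -> \bar R) (p : R -> R) : Prop :=
  forall x y : R,
    ((2^-1 * (x - p x) ^+ 2)%:E + f (p x) <= (2^-1 * (x - y) ^+ 2)%:E + f y)%E.

Definition l2sq (x : Lam -> R) : \bar R := \esum_(i in [set: Lam]) ((x i) ^+ 2)%:E.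
Definition in_l2 (x : Lam -> R) : Prop := (l2sq x < +oo)%E.
Definition l2norm (x : Lam -> R) : R := Num.sqrt (fine (l2sq x)).
(* <x,y> = sum_i x_i y_i, the (absolutely convergent) unordered sum *)
Definition l2inner (x y : Lam -> R) : R :=
  fine (\esum_(i in [set: Lam]) (Num.max (x i * y i) 0)%:E)
  - fine (\esum_(i in [set: Lam]) (Num.max (- (x i * y i)) 0)%:E).
Definition l2sub (x y : Lam -> R) : Lam -> R := fun i => x i - y i.

Definition is_prox_l2 (F : (Lam -> R) -> \bar R) (P : (Lam -> R) -> (Lam -> R)) : Prop :=
  forall x, in_l2 x ->
    in_l2 (P x) /\
    forall y, in_l2 y ->
      ((2^-1 * l2norm (l2sub x (P x)) ^+ 2)%:E + F (P x)
        <= (2^-1 * l2norm (l2sub x y) ^+ 2)%:E + F y)%E.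

Definition kappa_reg (s : R -> Lam -> R -> \bar R) (kappa : Lam -> R) (a : R)
  (x : Lam -> R) : \bar R := \esum_(l in [set: Lam]) s a l (kappa l * x l).

(* optimal Lipschitz constant on ell^2 (in \bar R: +oo if not Lipschitz) *)
Definition lip_l2 (D : (Lam -> R) -> (Lam -> R)) : \bar R :=
  ereal_inf [set L%:E | L in [set L : R | 0 <= L /\
     forall x y, in_l2 x -> in_l2 y ->
       l2norm (l2sub (D x) (D y)) <= L * l2norm (l2sub x y)]].

Definition den_range (D : R -> (Lam -> R) -> (Lam -> R)) : set (Lam -> R) :=
  [set y | exists a, 0 < a /\ exists x, in_l2 x /\ y = D a x].

Definition admissible_denoisers (D : R -> (Lam -> R) -> (Lam -> R)) : Prop :=
  (forall a, 0 < a -> forall x, in_l2 x -> in_l2 (D a x)) /\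
  (forall a, 0 < a -> (lip_l2 (D a) < 1%:E)%E) /\
  (forall x, den_range D x ->
     (fun a => l2norm (l2sub (D a x) x)) @ 0^'+ --> 0) /\
  (forall B : set (Lam -> R), B `<=` den_range D -> B !=set0 ->
     (exists r : R, forall x, B x -> l2norm x <= r) ->
     forall z, in_l2 z ->
       (fun a => ereal_sup [set (l2inner (l2sub (D a x) x) z)%:E | x in B])
         @ 0^'+ --> 0%E) /\
  (forall x, den_range D x -> exists M : R, forall a, 0 < a ->
     l2norm (l2sub x (D a x)) / (1 - fine (lip_l2 (D a))) <= M).

End Defs.

(* Main.v *)
Require Import Defs.
From HB Require Import structures.
From mathcomp Require Import all_boot all_order all_algebra.
From mathcomp Require Import all_classical all_reals all_analysis.
From mathcomp Require Import ring lra.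
Import Order.TTheory GRing.Theory Num.Theory.
Import numFieldNormedType.Exports.
Local Open Scope classical_set_scope.
Local Open Scope ring_scope.
Lemma absb {R : realType} (x : R) : - `|x| <= x /\ x <= `|x|.
Proof. by have := ler_norml x `|x|; rewrite lexx => /esym/andP[]. Qed.
Section Scalar.
Context {R : realType}.
Variables (s : R -> \bar R) (phi : R -> R).
Hypothesis s0 : s 0 = 0%E.
Hypothesis sge : forall x, (s 0 <= s x)%E.
Hypothesis scvx : econvex s.
Hypothesis sprox : is_prox1 s phi.

Lemma s_ge0 x : (0 <= s x)%E.
Proof. by rewrite -s0. Qed.

Lemma s_phi_fin w : s (phi w) \is a fin_num.
Proof.
have := sprox w 0; rewrite s0 adde0 => H.
rewrite ge0_fin_numE ?s_ge0 //.
apply: (le_lt_trans _ (ltry (2^-1 * (w-0)^+2))).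
apply: le_trans H; apply: leeDr; rewrite lee_fin; apply: mulr_ge0 => //.
exact: sqr_ge0.
Qed.

Lemma subgrad w z :
  ((fine (s (phi w)) + (w - phi w) * (z - phi w))%:E <= s z)%E.
Proof.
set y := phi w; have yfin := s_phi_fin w.
set sy := fine (s y); have esy : s y = sy%:E by rewrite /sy fineK.
have := s_ge0 z; case Ez : (s z) => [sz| |] // _; last by rewrite leey.
rewrite lee_fin; set h := z - y.
have key : forall e, 0 < e <= 1 -> sy + (w - y) * h <= sz + e * h^+2 / 2.
  move=> e /andP[e0 e1].
  have := scvx e z y; rewrite (ltW e0) e1 /= => /(_ isT) hcv.
  rewrite Ez esy -!EFinM -EFinD in hcv.
  have := sprox w (e * z + (1 - e) * y); rewrite esy => hp.
  have := le_trans hp (leeD2l _ hcv); rewrite -!EFinD lee_fin => H.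
  have E1 : e * z + (1 - e) * y = y + e * h by rewrite /h; ring.
  rewrite E1 in H.
  have Id : e * (sy + (w - y) * h - (sz + e * h ^+ 2 / 2)) =
    (2^-1 * (w - y) ^+ 2 + sy) - (2^-1 * (w - (y + e * h)) ^+ 2 + (e * sz + (1 - e) * sy)).
    by field.
  have : e * (sy + (w - y) * h - (sz + e * h ^+ 2 / 2)) <= 0 by rewrite Id subr_le0.
  by rewrite pmulr_rle0 // subr_le0.
apply/ler_addgt0Pr => e e0.
have hh : 0 <= h^+2 by exact: sqr_ge0.
have d0 : 0 < 2 * e + h^+2 by lra.
have e'0 : 0 < 2 * e / (2 * e + h^+2) by apply: divr_gt0; lra.
have e'1 : 2 * e / (2 * e + h^+2) <= 1 by rewrite ler_pdivrMr // mul1r; lra.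
have H := key (2 * e / (2 * e + h^+2)) (introT andP (conj e'0 e'1)).
suff : 2 * e / (2 * e + h ^+ 2) * h ^+ 2 / 2 <= e by lra.
have -> : 2 * e / (2 * e + h ^+ 2) * h ^+ 2 / 2 = e * (h^+2 / (2 * e + h^+2)).
  by field; rewrite gt_eqF.
rewrite ler_piMr //; first by lra.
by rewrite ler_pdivrMr // mul1r; lra.
Qed.
End Scalar.
Section Scalar2.
Context {R : realType}.
Variables (s : R -> \bar R) (phi : R -> R).
Hypothesis s0 : s 0 = 0%E.
Hypothesis sge : forall x, (s 0 <= s x)%E.
Hypothesis scvx : econvex s.
Hypothesis sprox : is_prox1 s phi.

Lemma strong g k u w z : 0 < g -> 0 < k ->
  k * u = g * k^+2 * w + (1 - g * k^+2) * phi w ->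
  ((2^-1 * (u - phi w / k)^+2)%:E + g%:E * s (k * (phi w / k))
     + (2^-1 * (z - phi w / k)^+2)%:E
   <= (2^-1 * (u - z)^+2)%:E + g%:E * s (k * z))%E.
Proof.
move=> g0 k0 hrel.
set q := phi w / k.
have kn0 : k != 0 by rewrite gt_eqF.
have ekq : k * q = phi w by rewrite /q mulrC divfK.
rewrite ekq; have sf := @s_phi_fin _ s phi s0 sge sprox w.
set sy := fine (s (phi w)); have esy : s (phi w) = sy%:E by rewrite /sy fineK.
have := @s_ge0 _ s s0 sge (k * z); case Ez : (s (k * z)) => [sz| |] // _; last first.
  by rewrite gt0_muley ?lte_fin // addey // leey.
have H := @subgrad _ s phi s0 sge scvx sprox w (k * z).
rewrite Ez -/sy lee_fin -ekq in H.
rewrite esy -!EFinM -!EFinD lee_fin.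
rewrite -ekq in hrel.
have e1 : u - q = g * k * (w - k * q).
  apply: (mulfI kn0); rewrite mulrBr hrel; ring.
have Hg : g * (sy + (w - k * q) * (k * z - k * q)) <= g * sz.
  by rewrite ler_pM2l.
have e2 : g * (w - k * q) * (k * z - k * q) = (u - q) * (z - q).
  by rewrite e1; ring.
have e3 : 2^-1 * (u - q) ^+ 2 + 2^-1 * (z - q) ^+ 2 - 2^-1 * (u - z) ^+ 2
   = (u - q) * (z - q) by field.
rewrite mulrDr mulrA e2 in Hg.
lra.
Qed.
End Scalar2.
Section Scalar3.
Context {R : realType}.
Variable (phi : R -> R).
Hypothesis mono : forall x y, x <= y -> phi x <= phi y.
Hypothesis lip1 : forall x y, `|phi x - phi y| <= `|x - y|.
Hypothesis phi0 : phi 0 = 0.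

Lemma absb0 (x : R) : - `|x| <= x /\ x <= `|x|.
Proof. by have := ler_norml x `|x|; rewrite lexx => /esym/andP[]. Qed.

Lemma lip1_cont (f : R -> R) : (forall x y, `|f x - f y| <= `|x - y|) -> continuous f.
Proof.
move=> Hf x; apply/cvgrPdist_le => e e0.
have H := @cvgr_dist_le _ _ _ (nbhs x) _ id x cvg_id e e0.
near=> y; apply: le_trans (Hf x y) _; near: y; exact: H.
Unshelve. all: by end_near.
Qed.

Lemma phi_pos w : 0 <= w -> 0 <= phi w <= w.
Proof.
move=> w0; have := mono _ _ w0; rewrite phi0 => ->/=.
have := lip1 w 0; rewrite phi0 !subr0 => /(le_trans (ler_norm _)).
by rewrite ger0_norm.
Qed.

Lemma phi_neg w : w <= 0 -> w <= phi w <= 0.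
Proof.
move=> w0; have m := mono _ _ w0; rewrite phi0 in m.
have H := lip1 w 0; rewrite phi0 !subr0 (ler0_norm w0) in H.
have [? ?] := absb (phi w); apply/andP; split; lra.
Qed.

Lemma g_surj t X : 0 < t < 1 -> exists w, t * w + (1 - t) * phi w = X.
Proof.
move=> /andP[t0 t1].
set g := fun w => t * w + (1 - t) * phi w.
have gc : continuous g.
  apply: lip1_cont => a b; rewrite /g.
  have -> : t * a + (1 - t) * phi a - (t * b + (1 - t) * phi b)
    = t * (a - b) + (1 - t) * (phi a - phi b) by ring.
  apply: le_trans (ler_normD _ _) _.
  have t0' : 0 <= t by lra.
  have t1' : 0 <= 1 - t by lra.
  rewrite normrM (ger0_norm t0') normrM (ger0_norm t1').
  have := lip1 a b => h.
  have := ler_wpM2l t1' h; lra.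
set b := `|X| / t.
have b0 : 0 <= b by apply: divr_ge0 => //; lra.
have tb : t * b = `|X| by rewrite /b mulrC divfK // gt_eqF.
have [c _ gcX] : exists2 c, c \in `[- b, b] & g c = X.
  apply: IVT; first lra.
    exact: continuous_subspaceT.
  have hb : X <= g b.
    rewrite /g; have := phi_pos _ b0 => /andP[p1 _].
    have : 0 <= (1 - t) * phi b by apply: mulr_ge0; lra.
    have [? ?] := absb X; lra.
  have ha : g (- b) <= X.
    rewrite /g; have := phi_neg (- b) ltac:(lra) => /andP[_ p1].
    have : (1 - t) * phi (- b) <= 0 by apply: mulr_ge0_le0; lra.
    have [? ?] := absb X; rewrite mulrN tb; lra.
  rewrite ge_min le_max; apply/andP; split; apply/orP; [left|right]; done.
by exists c.
Qed.
Lemma rel_bounds t w : 0 < t < 1 ->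
  t * `|w| <= `|t * w + (1 - t) * phi w| /\
  `|phi w| <= `|t * w + (1 - t) * phi w| /\
  `|t * w + (1 - t) * phi w - phi w| <= `|t * w + (1 - t) * phi w|.
Proof.
move=> /andP[t0 t1].
have e : t * w + (1 - t) * (phi w) - (phi w) = t * (w - (phi w)) by ring.
rewrite e.
have [w0|w0] := leP 0 w.
  have /andP[y0 yw] := phi_pos w w0.
  have h1 : 0 <= (1 - t) * (phi w) by apply: mulr_ge0; lra.
  have h2 : t * (phi w) <= t * w by rewrite ler_pM2l.
  have h3 : t * 0 <= t * w by rewrite ler_pM2l.
  rewrite mulr0 in h3.
  rewrite (ger0_norm w0) (ger0_norm y0) ger0_norm; last by lra.
  rewrite ger0_norm; last by rewrite mulr_ge0 //; lra.
  split; first by lra. split; last by lra.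
  have : t * (phi w) + (1 - t) * (phi w) = (phi w) by ring. lra.
have /andP[yw y0] := phi_neg w (ltW w0).
have h1 : (1 - t) * (phi w) <= 0 by apply: mulr_ge0_le0; lra.
have h2 : t * w <= t * (phi w) by rewrite ler_pM2l.
have h3 : t * w <= t * 0 by rewrite ler_pM2l // ltW.
rewrite mulr0 in h3.
rewrite (ltr0_norm w0) (ler0_norm y0) ler0_norm; last by lra.
rewrite ler0_norm; last by rewrite mulr_ge0_le0 //; lra.
split; first by lra. split; last by lra.
have : t * (phi w) + (1 - t) * (phi w) = (phi w) by ring. lra.
Qed.

Lemma rel_lip_ord t l c w1 w2 : 0 < t < 1 -> 0 < l < 1 ->
  (forall a b, `|phi a - phi b| <= c * `|a - b|) ->
  c <= t * l / (1 - l * (1 - t)) -> w2 <= w1 ->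
  `|phi w1 - phi w2| <=
  l * `|(t * w1 + (1 - t) * phi w1) - (t * w2 + (1 - t) * phi w2)|.
Proof.
move=> /andP[t0 t1] /andP[l0 l1] Hc cle w21.
have D0 : 0 < 1 - l * (1 - t) by nra.
have dy0 : 0 <= phi w1 - phi w2 by rewrite subr_ge0 mono.
have dw0 : 0 <= w1 - w2 by rewrite subr_ge0.
have dyc := Hc w1 w2; rewrite (ger0_norm dy0) (ger0_norm dw0) in dyc.
have cD : c * (1 - l * (1 - t)) <= t * l by rewrite -ler_pdivlMr.
have e : t * w1 + (1 - t) * phi w1 - (t * w2 + (1 - t) * phi w2)
  = t * (w1 - w2) + (1 - t) * (phi w1 - phi w2) by ring.
rewrite e (ger0_norm dy0) ger0_norm; last first.
  by apply: addr_ge0; apply: mulr_ge0 => //; lra.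
set dy := phi w1 - phi w2 in dy0 dyc *; set dw := w1 - w2 in dw0 dyc *.
have H1 : dy * (1 - l * (1 - t)) <= c * dw * (1 - l * (1 - t)) by rewrite ler_pM2r.
have H2 := ler_wpM2r dw0 cD.
lra.
Qed.
Lemma rel_lip t l c w1 w2 : 0 < t < 1 -> 0 < l < 1 ->
  (forall a b, `|phi a - phi b| <= c * `|a - b|) ->
  c <= t * l / (1 - l * (1 - t)) ->
  `|phi w1 - phi w2| <=
  l * `|(t * w1 + (1 - t) * phi w1) - (t * w2 + (1 - t) * phi w2)|.
Proof.
move=> ht hl Hc cle; have [h|h] := leP w2 w1; first exact: rel_lip_ord.
rewrite distrC [X in l * X]distrC; apply: rel_lip_ord => //; exact: ltW.
Qed.

Lemma rel_low t m w : 0 < t < 1 -> 0 <= m < 1 ->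
  (forall v, t * m / (1 - m * (1 - t)) * `|v| <= `|phi v|) ->
  `|t * w + (1 - t) * phi w - phi w| <= (1 - m) * `|t * w + (1 - t) * phi w|.
Proof.
move=> /andP[t0 t1] /andP[m0 m1] Hd.
have D0 : 0 < 1 - m * (1 - t) by nra.
have e : t * w + (1 - t) * phi w - phi w = t * (w - phi w) by ring.
rewrite e; have Hw := Hd w.
rewrite mulrAC ler_pdivrMr // in Hw.
have [w0|w0] := leP 0 w.
  have /andP[y0 yw] := phi_pos w w0.
  rewrite (ger0_norm w0) (ger0_norm y0) in Hw.
  have X0 : 0 <= t * w + (1 - t) * phi w.
    by apply: addr_ge0; apply: mulr_ge0 => //; lra.
  have d0 : 0 <= t * (w - phi w) by apply: mulr_ge0; lra.
  rewrite (ger0_norm X0) (ger0_norm d0).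
  have h1 := ler_wpM2l (ltW t0) yw.
  have : 0 <= m * ((1 - t) * phi w) by apply: mulr_ge0 => //; apply: mulr_ge0; lra.
  lra.
have /andP[yw y0] := phi_neg w (ltW w0).
rewrite (ltr0_norm w0) (ler0_norm y0) in Hw.
have X0 : t * w + (1 - t) * phi w <= 0.
  have : (1 - t) * phi w <= 0 by apply: mulr_ge0_le0; lra.
  have : t * w <= 0 by apply: mulr_ge0_le0; lra.
  lra.
have d0 : t * (w - phi w) <= 0 by apply: mulr_ge0_le0; lra.
rewrite (ler0_norm X0) (ler0_norm d0).
have h1 := ler_wpM2l (ltW t0) yw.
have : m * ((1 - t) * phi w) <= 0.
  by apply: mulr_ge0_le0 => //; apply: mulr_ge0_le0; lra.
lra.
Qed.

Lemma rel_conv t B w : 0 < t < 1 -> 0 <= B ->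
  `|t * w + (1 - t) * phi w| <= t * B ->
  `|t * w + (1 - t) * phi w - phi w| <=
    t * (`|B - phi B| + `|- B - phi (- B)|).
Proof.
move=> ht B0 HX; have [h1 _] := rel_bounds t w ht.
move: ht => /andP[t0 t1].
have wB : `|w| <= B by rewrite -(ler_pM2l t0); exact: le_trans h1 HX.
have e : t * w + (1 - t) * phi w - phi w = t * (w - phi w) by ring.
rewrite e normrM (gtr0_norm t0) ler_pM2l //.
have hmono : forall a b, a <= b -> a - phi a <= b - phi b.
  move=> a b ab; have := lip1 b a; rewrite (ger0_norm (_ : 0 <= b - a)).
    by move=> /(le_trans (proj2 (absb _))); lra.
  by rewrite subr_ge0.
have [wl wr] : - B <= w /\ w <= B by have := absb w; lra.
have := hmono _ _ wl; have := hmono _ _ wr.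
have [? ?] := absb (B - phi B); have [? ?] := absb (- B - phi (- B)).
have [? ?] := absb (w - phi w).
rewrite ler_norml; lra.
Qed.
End Scalar3.
Section L2.
Context {R : realType} {Lam : countType}.
Implicit Types (x y u v : Lam -> R).

Lemma sqr_abs (x : R) : x ^+ 2 = `|x| ^+ 2.
Proof. by rewrite real_normK // num_real. Qed.

Lemma esumZ {I : set Lam} (r : R) (a : Lam -> \bar R) : 0 <= r -> (forall i, (0 <= a i)%E) ->
  (r%:E * (\esum_(i in I) a i) = \esum_(i in I) (r%:E * a i))%E.
Proof.
move=> r0 a0; rewrite /esum -ereal_supZl //; last first.
  apply/set0P; exists 0%E; exists set0; first exact: fsets_set0.
  by rewrite fsbig_set0.
congr ereal_sup; apply/seteqP; split => z /=.
  by move=> [_ [A hA <-] <-]; exists A => //; rewrite ge0_mule_fsumr.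
move=> [A hA <-]; exists (\sum_(i \in A) a i)%E; first by exists A.
by rewrite ge0_mule_fsumr.
Qed.

Lemma l2sq_ge0 x : (0 <= l2sq x)%E.
Proof. by apply: esum_ge0 => i _; rewrite lee_fin sqr_ge0. Qed.

Lemma l2sq_fin {x} : in_l2 x -> l2sq x \is a fin_num.
Proof. by move=> h; rewrite ge0_fin_numE // l2sq_ge0. Qed.

Lemma l2sqE {x} : in_l2 x -> l2sq x = (l2norm x ^+ 2)%:E.
Proof.
move=> h; rewrite /l2norm sqr_sqrtr ?fine_ge0 ?l2sq_ge0 //.
by rewrite fineK // l2sq_fin.
Qed.

Lemma l2norm_ge0 x : 0 <= l2norm x.
Proof. exact: sqrtr_ge0. Qed.

Lemma l2sq_le {u v c} : 0 <= c -> (forall l, `|u l| <= c * `|v l|) ->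
  (l2sq u <= (c ^+ 2)%:E * l2sq v)%E.
Proof.
move=> c0 h; rewrite /l2sq esumZ ?sqr_ge0 //; last by move=> i; rewrite lee_fin sqr_ge0.
apply: le_esum => i _; rewrite -EFinM lee_fin (sqr_abs (u i)) (sqr_abs (v i)).
have := h i; have := normr_ge0 (u i); have := normr_ge0 (v i); nra.
Qed.

Lemma in_l2_le {u v c} : 0 <= c -> in_l2 v -> (forall l, `|u l| <= c * `|v l|) ->
  in_l2 u.
Proof.
move=> c0 hv h; rewrite /in_l2; apply: le_lt_trans (l2sq_le c0 h) _.
by rewrite -(fineK (l2sq_fin hv)) -EFinM ltry.
Qed.

Lemma l2norm_le {u v c} : 0 <= c -> in_l2 v -> (forall l, `|u l| <= c * `|v l|) ->
  l2norm u <= c * l2norm v.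
Proof.
move=> c0 hv h; have hu := in_l2_le c0 hv h.
have := l2sq_le c0 h; rewrite (l2sqE hu) (l2sqE hv) -EFinM lee_fin => H.
rewrite -(ler_pXn2r (n:=2)) //; last by rewrite nnegrE mulr_ge0 // l2norm_ge0.
  by rewrite exprMn.
by rewrite nnegrE l2norm_ge0.
Qed.

Lemma in_l2_sub {x y} : in_l2 x -> in_l2 y -> in_l2 (l2sub x y).
Proof.
move=> hx hy; rewrite /in_l2 /l2sq.
apply: (@le_lt_trans _ _ (\esum_(i in [set: Lam]) ((2%:E * ((x i)^+2)%:E) + (2%:E * ((y i)^+2)%:E)))%E).
  apply: le_esum => i _; rewrite -!EFinM -EFinD lee_fin /l2sub.
  have : 0 <= (x i + y i)^+2 by exact: sqr_ge0.
  nra.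
rewrite esumD; last by move=> i _; rewrite -EFinM lee_fin mulr_ge0 // sqr_ge0.
  2: by move=> i _; rewrite -EFinM lee_fin mulr_ge0 // sqr_ge0.
rewrite -!esumZ //; try by move=> i; rewrite lee_fin sqr_ge0.
rewrite -/(l2sq x) -/(l2sq y) -(fineK (l2sq_fin hx)) -(fineK (l2sq_fin hy)).
by rewrite -!EFinM -EFinD ltry.
Qed.

Lemma coord_le {x} l : in_l2 x -> `|x l| <= l2norm x.
Proof.
move=> hx; rewrite -(ler_pXn2r (n:=2)) ?nnegrE ?l2norm_ge0 //.
rewrite -lee_fin -l2sqE // -sqr_abs /l2sq; apply: esum_ge.
exists [set l]; first by split => //; exact: finite_set1.
by rewrite fsbig_set1.
Qed.
End L2.
Section L2b.
Context {R : realType} {Lam : countType}.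

Lemma tail (c : Lam -> R) eta : (forall i, 0 <= c i) ->
  (\esum_(i in [set: Lam]) (c i)%:E < +oo)%E -> 0 < eta ->
  exists F, finite_set F /\
    (\esum_(i in [set: Lam] `&` ~` F) (c i)%:E <= eta%:E)%E.
Proof.
move=> c0 Sfin' eta0.
set S := \esum_(i in [set: Lam]) (c i)%:E.
have S0 : (0 <= S)%E by apply: esum_ge0 => i _; rewrite lee_fin.
have Sfin : S \is a fin_num by rewrite ge0_fin_numE.
have H1 : (S - eta%:E < S)%E.
  by rewrite -(fineK Sfin) -EFinB lte_fin; lra.
have [_ [F [finF _] <-] hF] := ereal_sup_gt H1.
exists F; split => //.
have H0 : forall i, [set: Lam] i -> (0 <= (c i)%:E)%E by move=> i _; rewrite lee_fin.
have := esumID F _ _ H0.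
rewrite [[set: Lam] `&` F]setTI (@esum_fset _ _ _ _ finF); last by move=> i _; rewrite lee_fin.
rewrite -/S; set A := (\sum_(i \in F) (c i)%:E)%E in hF *.
set B := \esum_(i in [set: Lam] `&` ~` F) (c i)%:E => eS.
have A0 : (0 <= A)%E by apply: fsume_ge0 => i _; rewrite lee_fin.
have B0 : (0 <= B)%E by apply: esum_ge0 => i _; rewrite lee_fin.
have Afin : A \is a fin_num.
  by rewrite ge0_fin_numE // (le_lt_trans _ Sfin') // -/S eS leeDl.
have Bfin : B \is a fin_num.
  by rewrite ge0_fin_numE // (le_lt_trans _ Sfin') // -/S eS leeDr.
move: hF eS; rewrite -(fineK Afin) -(fineK Bfin) -(fineK Sfin).
rewrite -EFinB -EFinD lte_fin lee_fin => hF eS'; have eS := EFin_inj eS'; lra.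
Qed.

Lemma near_sum_seq (b : R -> Lam -> R) (r : seq Lam) :
  (forall l e, 0 < e -> \forall a \near 0^'+, b a l <= e) ->
  forall e, 0 < e -> \forall a \near 0^'+, \sum_(l <- r) b a l <= e.
Proof.
move=> hb; elim: r => [|i r IH] e e0.
  by apply: nearW => a; rewrite big_nil ltW.
have e2 : 0 < e / 2 by rewrite divr_gt0.
apply: filterS2 (hb i _ e2) (IH _ e2) => a h1 h2.
rewrite big_cons; lra.
Qed.

Lemma near_sum (b : R -> Lam -> R) (F : set Lam) : finite_set F ->
  (forall l e, 0 < e -> \forall a \near 0^'+, b a l <= e) ->
  forall e, 0 < e -> \forall a \near 0^'+, (\sum_(l \in F) (b a l)%:E <= e%:E)%E.
Proof.
move=> finF hb e e0.
suff : \forall a \near 0^'+, \sum_(l <- finmap.enum_fset (fset_set F)) b a l <= e.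
  by apply: filterS => a h; rewrite fsbig_finite // sumEFin lee_fin.
exact: near_sum_seq.
Qed.

Lemma l2inner_le (u v : Lam -> R) M :
  (\esum_(i in [set: Lam]) (`|u i * v i|)%:E <= M%:E)%E -> `|l2inner u v| <= M.
Proof.
move=> h; rewrite /l2inner.
set P := \esum_(i in [set: Lam]) (Num.max (u i * v i) 0)%:E.
set N := \esum_(i in [set: Lam]) (Num.max (- (u i * v i)) 0)%:E.
have P0 : (0 <= P)%E by apply: esum_ge0 => i _; rewrite lee_fin le_max lexx orbT.
have N0 : (0 <= N)%E by apply: esum_ge0 => i _; rewrite lee_fin le_max lexx orbT.
have PM : (P <= M%:E)%E.
  apply: le_trans h; apply: le_esum => i _; rewrite lee_fin ge_max normr_ge0 andbT.
  by have [] := absb (u i * v i).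
have NM : (N <= M%:E)%E.
  apply: le_trans h; apply: le_esum => i _; rewrite lee_fin ge_max normr_ge0 andbT.
  by have [] := absb (u i * v i); lra.
have Pf : P \is a fin_num by rewrite ge0_fin_numE // (le_lt_trans PM) ?ltry.
have Nf : N \is a fin_num by rewrite ge0_fin_numE // (le_lt_trans NM) ?ltry.
move: P0 N0 PM NM; rewrite -(fineK Pf) -(fineK Nf) !lee_fin => P0 N0 PM NM.
rewrite ler_norml; apply/andP; split; lra.
Qed.

Lemma cvg0_real (f : R -> R) :
  (forall e, 0 < e -> \forall a \near 0^'+, `|f a| <= e) -> f @ 0^'+ --> 0.
Proof.
move=> h; apply/cvgrPdist_le => e e0; apply: filterS (h e e0) => a.
by rewrite sub0r normrN.
Qed.

Lemma cvg0_ereal (f : R -> \bar R) :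
  (forall e, 0 < e -> \forall a \near 0^'+, ((-e)%:E <= f a <= e%:E)%E) ->
  f @ 0^'+ --> 0%E.
Proof.
move=> h; apply: cvg_EFin.
  apply: filterS (h 1 ltr01) => a /andP[h1 h2].
  by rewrite fin_numElt (lt_le_trans (ltNyr _) h1) (le_lt_trans h2 (ltry _)).
apply: cvg0_real => e e0; apply: filterS (h e e0) => a /andP[h1 h2].
have fa : f a \is a fin_num.
  by rewrite fin_numElt (lt_le_trans (ltNyr _) h1) (le_lt_trans h2 (ltry _)).
move: h1 h2; rewrite -(fineK fa) !lee_fin /= => h1 h2.
by rewrite ler_norml h1 h2.
Qed.
End L2b.
Section Main.
Context {R : realType} {Lam : countType}.
Variables (kappa : Lam -> R) (phi : R -> R -> R -> R) (s : R -> Lam -> R -> \bar R)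
  (gamma : R) (ell : R -> R) (C : R).
Hypothesis kpos : forall l, 0 < kappa l.
Hypothesis tl : forall l, 0 < gamma * kappa l ^+ 2 < 1.
Hypothesis gpos : 0 < gamma.
Hypothesis filt : nl_reg_filter phi.
Hypothesis sreg : forall a, 0 < a -> forall l,
     eproper (s a l) /\ econvex (s a l) /\ elsc (s a l) /\
     (forall x : R, (s a l 0%R <= s a l x)%E) /\ s a l 0%R = 0%E /\
     is_prox1 (s a l) (phi a (kappa l)).
Hypothesis ellb : forall a, 0 < a -> 0 < ell a < 1.
Hypothesis HC1 : forall a, 0 < a -> forall l, forall x y,
     `|phi a (kappa l) x - phi a (kappa l) y|
       <= gamma * kappa l ^+ 2 * ell a
          / (1 - ell a * (1 - gamma * kappa l ^+ 2)) * `|x - y|.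
Hypothesis C1 : 1 <= C.
Hypothesis HC2 : forall a, 0 < a -> C <= (1 - ell a)^-1 -> forall l x,
       gamma * kappa l ^+ 2 * (1 - C * (1 - ell a))
         / (1 - (1 - C * (1 - ell a)) * (1 - gamma * kappa l ^+ 2)) * `|x|
       <= `|phi a (kappa l) x|.

Definition isQ a l u q := exists w,
  kappa l * u = gamma * kappa l ^+ 2 * w + (1 - gamma * kappa l ^+ 2) * phi a (kappa l) w
  /\ q = phi a (kappa l) w / kappa l.

Lemma fmono a l : 0 < a -> forall x y, x <= y -> phi a (kappa l) x <= phi a (kappa l) y.
Proof. by move=> a0; have [] := filt _ _ a0 (kpos l). Qed.
Lemma flip a l : 0 < a -> forall x y, `|phi a (kappa l) x - phi a (kappa l) y| <= `|x - y|.
Proof. by move=> a0; have [_ []] := filt _ _ a0 (kpos l). Qed.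
Lemma fzero a l : 0 < a -> phi a (kappa l) 0 = 0.
Proof. by move=> a0; have [_ [_ []]] := filt _ _ a0 (kpos l). Qed.

Lemma isQ_ex a l u : exists q, 0 < a -> isQ a l u q.
Proof.
have [a0|a0] := ltP 0 a; last by exists 0 => h; exfalso; lra.
have [w hw] := g_surj _ (fmono a l a0) (flip a l a0) (fzero a l a0) _ (kappa l * u) (tl l).
by exists (phi a (kappa l) w / kappa l) => _; exists w; split.
Qed.

Lemma isQ_strong {a l u q} : 0 < a -> isQ a l u q -> forall z,
  ((2^-1 * (u - q)^+2)%:E + gamma%:E * s a l (kappa l * q)
     + (2^-1 * (z - q)^+2)%:E
   <= (2^-1 * (u - z)^+2)%:E + gamma%:E * s a l (kappa l * z))%E.
Proof.
move=> a0 [w [hw ->]] z.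
have [_ [cvx [_ [sge [s0 pr]]]]] := sreg _ a0 l.
exact: (@strong _ _ _ s0 sge cvx pr _ _ _ _ z gpos (kpos l) hw).
Qed.

Lemma scale_le (k a b c : R) : 0 < k -> `|a| <= c * `|k * b| -> `|a / k| <= c * `|b|.
Proof.
move=> k0 h; rewrite normrM normrV ?unitfE ?gt_eqF // (gtr0_norm k0).
rewrite ler_pdivrMr // mulrAC -(gtr0_norm k0) -mulrA -normrM.
done.
Qed.

Lemma isQ_abs {a l u q} : 0 < a -> isQ a l u q -> `|q| <= `|u| /\ `|u - q| <= `|u|.
Proof.
move=> a0 [w [hw ->]].
have [_ [h2 h3]] := rel_bounds _ (fmono a l a0) (flip a l a0) (fzero a l a0) _ w (tl l).
rewrite -hw in h2 h3.
have k0 := kpos l.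
split; first by rewrite -[`|u|]mul1r; apply: scale_le => //; rewrite mul1r.
have -> : u - phi a (kappa l) w / kappa l = (kappa l * u - phi a (kappa l) w) / kappa l.
  by field; rewrite gt_eqF.
by rewrite -[`|u|]mul1r; apply: scale_le => //; rewrite mul1r.
Qed.
Lemma isQ_lip {a l u1 u2 q1 q2} : 0 < a -> isQ a l u1 q1 -> isQ a l u2 q2 ->
  `|q1 - q2| <= ell a * `|u1 - u2|.
Proof.
move=> a0 [w1 [h1 ->]] [w2 [h2 ->]].
have H := @rel_lip _ _ (fmono a l a0) _ _ _ w1 w2 (tl l) (ellb _ a0) (HC1 _ a0 l) (lexx _).
rewrite -h1 -h2 -mulrBr in H.
rewrite -mulrBl; apply: scale_le => //; exact: kpos.
Qed.

Lemma isQ_low {a l u q} : 0 < a -> isQ a l u q -> `|u - q| <= C * (1 - ell a) * `|u|.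
Proof.
move=> a0 hq; have [el0 el1] : 0 < ell a /\ ell a < 1 by have := ellb _ a0; case/andP.
have [hC|hC] := leP C (1 - ell a)^-1; last first.
  have : 1 < C * (1 - ell a) by rewrite -ltr_pdivrMr ?div1r //; lra.
  have [_ h] := isQ_abs a0 hq; have := normr_ge0 u; nra.
case: hq => w [hw ->].
have m0 : 0 <= 1 - C * (1 - ell a).
  by rewrite subr_ge0 -ler_pdivlMr ?div1r //; lra.
have m1 : 1 - C * (1 - ell a) < 1.
  have : 0 < C * (1 - ell a) by apply: mulr_gt0; [exact: lt_le_trans ltr01 C1|lra].
  lra.
have H := @rel_low _ _ (fmono a l a0) (flip a l a0) (fzero a l a0) _ _ w (tl l)
   (introT andP (conj m0 m1)) (HC2 _ a0 hC l).
rewrite -hw (_ : 1 - (1 - C * (1 - ell a)) = C * (1 - ell a)) in H; last by ring.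
have -> : u - phi a (kappa l) w / kappa l = (kappa l * u - phi a (kappa l) w) / kappa l.
  by field; rewrite gt_eqF.
by apply: scale_le.
Qed.

Definition Eb a l r := gamma * kappa l *
  (`|r / (gamma * kappa l) - phi a (kappa l) (r / (gamma * kappa l))|
   + `|- (r / (gamma * kappa l)) - phi a (kappa l) (- (r / (gamma * kappa l)))|).

Lemma Eb_ge0 a l r : 0 <= Eb a l r.
Proof.
apply: mulr_ge0; last by apply: addr_ge0.
by apply: mulr_ge0; [exact: ltW gpos|apply: ltW].
Qed.

Lemma isQ_conv {a l u q r} : 0 < a -> isQ a l u q -> 0 <= r -> `|u| <= r ->
  `|u - q| <= Eb a l r.
Proof.
move=> a0 [w [hw ->]] r0 ur.
have k0 := kpos l.
have gk0 : 0 < gamma * kappa l by apply: mulr_gt0.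
set B := r / (gamma * kappa l).
have B0 : 0 <= B by apply: divr_ge0 => //; lra.
have HX : `|gamma * kappa l ^+ 2 * w + (1 - gamma * kappa l ^+ 2) * phi a (kappa l) w|
   <= gamma * kappa l ^+ 2 * B.
  rewrite -hw normrM (gtr0_norm k0).
  have -> : gamma * kappa l ^+ 2 * B = kappa l * r.
    by rewrite /B; field; rewrite !gt_eqF.
  by rewrite ler_pM2l.
have H := @rel_conv _ _ (fmono a l a0) (flip a l a0) (fzero a l a0) _ _ w (tl l) B0 HX.
rewrite -hw in H.
have -> : u - phi a (kappa l) w / kappa l = (kappa l * u - phi a (kappa l) w) / kappa l.
  by field; rewrite gt_eqF.
rewrite normrM normrV ?unitfE ?gt_eqF // (gtr0_norm k0) ler_pdivrMr //.
apply: le_trans H _; rewrite /Eb -/B.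
by rewrite le_eqVlt; apply/orP; left; apply/eqP; ring.
Qed.

Lemma Eb_cvg l r e : 0 < e -> \forall a \near 0^'+, Eb a l r <= e.
Proof.
move=> e0.
have k0 := kpos l.
have gk0 : 0 < gamma * kappa l by apply: mulr_gt0.
have [_ [_ [_ hc]]] := filt _ _ ltr01 k0.
set B := r / (gamma * kappa l).
have e'0 : 0 < e / (2 * (gamma * kappa l)) by apply: divr_gt0 => //; lra.
have h1 : \forall a \near 0^'+, `|B - phi a (kappa l) B| <= e / (2 * (gamma * kappa l)).
  by move: (hc B) => /cvgrPdist_le /(_ _ e'0).
have h2 : \forall a \near 0^'+, `|- B - phi a (kappa l) (- B)| <= e / (2 * (gamma * kappa l)).
  by move: (hc (- B)) => /cvgrPdist_le /(_ _ e'0).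
apply: filterS2 h1 h2 => a H1 H2.
rewrite /Eb -/B.
have -> : e = gamma * kappa l * (e / (2 * (gamma * kappa l)) + e / (2 * (gamma * kappa l))).
  by field; rewrite !gt_eqF.
by rewrite ler_pM2l //; apply: lerD.
Qed.
Definition Jf a (x : Lam -> R) l z :=
  ((2^-1 * (x l - z)^+2)%:E + gamma%:E * s a l (kappa l * z))%E.

Lemma sa_ge0 a l z : 0 < a -> (0 <= s a l z)%E.
Proof. by move=> a0; have [_ [_ [_ [sge [s0 _]]]]] := sreg _ a0 l; rewrite -s0. Qed.

Lemma Jf_ge0 a x l z : 0 < a -> (0 <= Jf a x l z)%E.
Proof.
move=> a0; apply: adde_ge0.
  by rewrite lee_fin mulr_ge0 ?invr_ge0 ?sqr_ge0.
by apply: mule_ge0; [rewrite lee_fin ltW|exact: sa_ge0].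
Qed.

Lemma J_expand a x y : 0 < a -> in_l2 x -> in_l2 y ->
  ((2^-1 * l2norm (l2sub x y) ^+ 2)%:E + gamma%:E * kappa_reg s kappa a y)%E
  = \esum_(l in [set: Lam]) Jf a x l (y l).
Proof.
move=> a0 hx hy; rewrite /Jf esumD; first last.
- by move=> l _; apply: mule_ge0; [rewrite lee_fin ltW|exact: sa_ge0].
- by move=> l _; rewrite lee_fin mulr_ge0 ?invr_ge0 ?sqr_ge0.
congr (_ + _)%E.
  rewrite EFinM -(l2sqE (in_l2_sub hx hy)) /l2sq esumZ ?invr_ge0 //; last first.
    by move=> i; rewrite lee_fin sqr_ge0.
rewrite /kappa_reg esumZ //; first exact: ltW.
by move=> i; exact: sa_ge0.
Qed.

Lemma prox_core {a x p q} : 0 < a -> in_l2 x -> in_l2 p ->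
  (forall l, isQ a l (x l) (q l)) ->
  [/\ in_l2 q, (\esum_(l in [set: Lam]) Jf a x l (q l)) \is a fin_num &
  ((\esum_(l in [set: Lam]) Jf a x l (q l))
     + \esum_(l in [set: Lam]) (2^-1 * (p l - q l)^+2)%:E
   <= \esum_(l in [set: Lam]) Jf a x l (p l))%E].
Proof.
move=> a0 hx hp hq; split.
- apply: (in_l2_le (c := 1)) hx _ => // l; rewrite mul1r.
  by have [] := isQ_abs a0 (hq l).
- rewrite ge0_fin_numE; last by apply: esum_ge0 => l _; exact: Jf_ge0.
  apply: (@le_lt_trans _ _ (\esum_(l in [set: Lam]) (2^-1 * (x l)^+2)%:E)).
    apply: le_esum => l _.
    have H := isQ_strong a0 (hq l) 0.
    rewrite mulr0 /= (_ : s a l 0 = 0%E) ?mule0 ?adde0 ?subr0 in H; last first.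
      by have [_ [_ [_ [_ [s0 _]]]]] := sreg _ a0 l.
    apply: le_trans H; apply: leeDl; rewrite lee_fin mulr_ge0 ?invr_ge0 ?sqr_ge0 //.
  rewrite (eq_esum (b := fun l => (2^-1%:E * ((x l)^+2)%:E)%E)); last first.
    by move=> l _; rewrite EFinM.
  rewrite -esumZ ?invr_ge0 //; last by move=> i; rewrite lee_fin sqr_ge0.
  by rewrite -/(l2sq x) -(fineK (l2sq_fin hx)) -EFinM ltry.
- rewrite -esumD; first last.
  + by move=> l _; rewrite lee_fin mulr_ge0 ?invr_ge0 ?sqr_ge0.
  + by move=> l _; exact: Jf_ge0.
  apply: le_esum => l _; exact: isQ_strong a0 (hq l) (p l).
Qed.

Lemma prox_unique {P a x q} : 0 < a ->
  is_prox_l2 (fun y => (gamma%:E * kappa_reg s kappa a y)%E) P -> in_l2 x ->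
  (forall l, isQ a l (x l) (q l)) -> P x = q.
Proof.
move=> a0 HP hx hq; have [hp Hp] := HP x hx.
have [hq2 Jfin Hin] := prox_core a0 hx hp hq.
have := Hp q hq2; rewrite !J_expand // => H.
set D := \esum_(l in [set: Lam]) (2^-1 * (P x l - q l)^+2)%:E in Hin.
have D0 : (0 <= D)%E by apply: esum_ge0 => l _; rewrite lee_fin mulr_ge0 ?invr_ge0 ?sqr_ge0.
have : (\esum_(l in [set: Lam]) Jf a x l (q l) + D <=
        \esum_(l in [set: Lam]) Jf a x l (q l) + 0)%E.
  by rewrite adde0; apply: le_trans Hin H.
rewrite leeD2lE // => D0'.
apply/funext => l.
have : ((2^-1 * (P x l - q l)^+2)%:E <= D)%E.
  apply: esum_ge; exists [set l]; first by split => //; exact: finite_set1.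
  by rewrite fsbig_set1.
move=> /le_trans /(_ D0'); rewrite lee_fin => h.
have h2 : (P x l - q l)^+2 <= 0.
  by move: h; rewrite pmulr_rle0 // invr_gt0; lra.
have : (P x l - q l)^+2 = 0 by apply/le_anti; rewrite h2 sqr_ge0.
by move/eqP; rewrite sqrf_eq0 subr_eq0 => /eqP.
Qed.
Lemma P_isQ P a x : 0 < a ->
  is_prox_l2 (fun y => (gamma%:E * kappa_reg s kappa a y)%E) P -> in_l2 x ->
  forall l, isQ a l (x l) (P x l).
Proof.
move=> a0 HP hx.
have [q hq] := choice (fun l => isQ_ex a l (x l)).
rewrite (prox_unique a0 HP hx (fun l => hq l a0)).
by move=> l; exact: hq l a0.
Qed.

Lemma prox_exists a : 0 < a ->
  exists P, is_prox_l2 (fun y => (gamma%:E * kappa_reg s kappa a y)%E) P.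
Proof.
move=> a0.
exists (fun x l => projT1 (cid (isQ_ex a l (x l)))) => x hx.
have hq : forall l, isQ a l (x l) (projT1 (cid (isQ_ex a l (x l)))).
  by move=> l; exact: (projT2 (cid (isQ_ex a l (x l)))) a0.
have [hq2 _ _] := prox_core a0 hx hx hq.
split => // y hy; rewrite !J_expand //.
have [_ _ Hin] := prox_core a0 hx hy hq.
apply: le_trans Hin; apply: leeDl.
by apply: esum_ge0 => l _; rewrite lee_fin mulr_ge0 ?invr_ge0 ?sqr_ge0.
Qed.

Lemma split_bound (f : Lam -> R) (F : set Lam) A B : finite_set F ->
  (forall l, 0 <= f l) ->
  (\sum_(l \in F) (f l)%:E <= A%:E)%E ->
  (\esum_(l in [set: Lam] `&` ~` F) (f l)%:E <= B%:E)%E ->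
  (\esum_(l in [set: Lam]) (f l)%:E <= (A + B)%:E)%E.
Proof.
move=> finF f0 hA hB.
have H0 : forall i, [set: Lam] i -> (0 <= (f i)%:E)%E by move=> i _; rewrite lee_fin.
rewrite (esumID F _ _ H0) [[set: Lam] `&` F]setTI (@esum_fset _ _ _ _ finF); last first.
  by move=> i _; rewrite lee_fin.
by rewrite EFinD; apply: leeD.
Qed.

Lemma esum_sub_le (f : Lam -> R) (F : set Lam) : (forall l, 0 <= f l) ->
  (\esum_(l in [set: Lam] `&` ~` F) (f l)%:E <= \esum_(l in [set: Lam]) (f l)%:E)%E.
Proof.
move=> f0.
have H0 : forall i, [set: Lam] i -> (0 <= (f i)%:E)%E by move=> i _; rewrite lee_fin.
rewrite [X in (_ <= X)%E](esumID F _ _ H0); apply: leeDr.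
by apply: esum_ge0 => i _; rewrite lee_fin.
Qed.

Lemma near_scale (b : R -> Lam -> R) (c : Lam -> R) :
  (forall l, 0 <= c l) ->
  (forall l e, 0 < e -> \forall a \near 0^'+, b a l <= e) ->
  (forall l e, 0 < e -> \forall a \near 0^'+, c l * b a l <= e).
Proof.
move=> c0 hb l e e0.
have e'0 : 0 < e / (c l + 1) by apply: divr_gt0 => //; have := c0 l; lra.
apply: filterS (hb l _ e'0) => a h.
apply: le_trans (ler_wpM2l (c0 l) h) _.
rewrite mulrA ler_pdivrMr; last by have := c0 l; lra.
have := c0 l; nra.
Qed.

Lemma l2norm_bound (d : Lam -> R) (e : R) : in_l2 d -> 0 <= e -> (l2sq d <= (e ^+ 2)%:E)%E ->
  l2norm d <= e.
Proof.
move=> hd e0; rewrite (l2sqE hd) lee_fin => h.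
by rewrite -(ler_pXn2r (n:=2)) ?nnegrE ?l2norm_ge0.
Qed.

Lemma amgm (a b d : R) : 0 < d -> a * b <= d / 2 * a ^+ 2 + (2 * d)^-1 * b ^+ 2.
Proof.
move=> d0.
have e : (2 * d) * (d / 2 * a ^+ 2 + (2 * d)^-1 * b ^+ 2 - a * b) = (d * a - b) ^+ 2.
  by field; rewrite gt_eqF.
have : 0 <= (2 * d) * (d / 2 * a ^+ 2 + (2 * d)^-1 * b ^+ 2 - a * b).
  by rewrite e sqr_ge0.
rewrite pmulr_rge0; last by lra.
by rewrite subr_ge0.
Qed.
Section Adm.
Variable P : R -> (Lam -> R) -> (Lam -> R).
Hypothesis HP : forall a, 0 < a ->
  is_prox_l2 (fun y => (gamma%:E * kappa_reg s kappa a y)%E) (P a).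

Lemma Pl2 {a x} : 0 < a -> in_l2 x -> in_l2 (P a x).
Proof. by move=> a0 hx; have [] := HP _ a0 x hx. Qed.

Lemma PQ {a x} l : 0 < a -> in_l2 x -> isQ a l (x l) (P a x l).
Proof. by move=> a0 hx; exact: P_isQ _ _ _ a0 (HP _ a0) hx l. Qed.

Lemma lip_bounds {a} : 0 < a ->
  (0 <= lip_l2 (P a))%E /\ (lip_l2 (P a) <= (ell a)%:E)%E.
Proof.
move=> a0; have [el0 el1] : 0 < ell a /\ ell a < 1 by have := ellb _ a0; case/andP.
split.
  by apply: le_ereal_inf_tmp => _ [L [L0 _] <-]; rewrite lee_fin.
apply: ereal_inf_lbound; exists (ell a) => //; split; first exact: ltW.
move=> x y hx hy; apply: l2norm_le; first exact: ltW.
  exact: in_l2_sub.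
move=> l; rewrite /l2sub.
exact: isQ_lip a0 (PQ l a0 hx) (PQ l a0 hy).
Qed.

Lemma range_l2 x : den_range P x -> in_l2 x.
Proof. by move=> [a [a0 [x0 [hx0 ->]]]]; exact: Pl2. Qed.

Lemma d_bounds {a x} l {r} : 0 < a -> in_l2 x -> 0 <= r -> `|x l| <= r ->
  `|P a x l - x l| <= `|x l| /\ `|P a x l - x l| <= Eb a l r.
Proof.
move=> a0 hx r0 hr; have hq := PQ l a0 hx.
rewrite distrC; split; first by have [] := isQ_abs a0 hq.
exact: isQ_conv a0 hq r0 hr.
Qed.

Lemma D2 : forall x, den_range P x ->
  (fun a => l2norm (l2sub (P a x) x)) @ 0^'+ --> 0.
Proof.
move=> x /range_l2 hx; apply: cvg0_real => e e0.
set r := l2norm x.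
have r0 : 0 <= r := l2norm_ge0 x.
have ee0 : 0 < e ^+ 2 / 2 by apply: divr_gt0 => //; apply: exprn_gt0.
have [F [finF hF]] := @tail _ _ (fun l => x l ^+ 2) _ (fun l => sqr_ge0 (x l)) hx ee0.
have hb := @near_scale (fun a l => Eb a l r) (fun l => `|x l|)
  (fun l => normr_ge0 (x l)) (fun l e' he' => Eb_cvg l r e' he').
have hN := near_sum (fun a l => `|x l| * Eb a l r) _ finF hb _ ee0.
apply: filterS2 hN (@nbhs_right_gt R 0) => a h1 a0.
rewrite ger0_norm ?l2norm_ge0 //.
apply: l2norm_bound; [exact: in_l2_sub (Pl2 a0 hx) hx| exact: ltW|].
have -> : e ^+ 2 = e ^+ 2 / 2 + e ^+ 2 / 2 by field.
apply: (@split_bound _ F _ _ finF).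
- by move=> l; exact: sqr_ge0.
- apply: le_trans _ h1; apply: lee_fsum => // l _; rewrite lee_fin /l2sub.
  have [d1 d2] := d_bounds l a0 hx r0 (coord_le l hx).
  rewrite sqr_abs expr2.
  apply: le_trans (ler_wpM2r (normr_ge0 _) d1) _.
  by apply: ler_wpM2l => //; exact: normr_ge0.
- apply: le_trans _ hF; apply: le_esum => l _; rewrite lee_fin /l2sub.
  have [d1 _] := d_bounds l a0 hx r0 (coord_le l hx).
  rewrite (sqr_abs (P a x l - x l)) (sqr_abs (x l)).
  by rewrite ler_pXn2r ?nnegrE ?normr_ge0.
Qed.
Lemma D1 a : 0 < a -> (lip_l2 (P a) < 1%:E)%E.
Proof.
move=> a0; have [_ h] := lip_bounds a0.
apply: le_lt_trans h _; rewrite lte_fin.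
by have := ellb _ a0; case/andP.
Qed.

Lemma D4 x : den_range P x -> exists M : R, forall a, 0 < a ->
  l2norm (l2sub x (P a x)) / (1 - fine (lip_l2 (P a))) <= M.
Proof.
move=> /range_l2 hx; exists (C * l2norm x) => a a0.
have [el0 el1] : 0 < ell a /\ ell a < 1 by have := ellb _ a0; case/andP.
have [L0 L1] := lip_bounds a0.
have Lf : lip_l2 (P a) \is a fin_num.
  by rewrite ge0_fin_numE // (le_lt_trans L1) ?ltry.
have f0 : 0 <= fine (lip_l2 (P a)) by rewrite fine_ge0.
have f1 : fine (lip_l2 (P a)) <= ell a.
  by rewrite -lee_fin fineK.
have C0 : 0 <= C * (1 - ell a) by apply: mulr_ge0; [exact: le_trans ler01 C1|lra].
have N := @l2norm_le _ _ (l2sub x (P a x)) x _ C0 hx (fun l => isQ_low a0 (PQ l a0 hx)).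
have n0 := l2norm_ge0 x.
rewrite ler_pdivrMr; last by lra.
apply: le_trans N _.
have : C * (1 - ell a) <= C * (1 - fine (lip_l2 (P a))).
  by apply: ler_wpM2l; [exact: le_trans ler01 C1|lra].
move=> h; have := ler_wpM2r n0 h; rewrite mulrAC [X in _ <= X -> _]mulrAC.
by [].
Qed.

Lemma D3 (B : set (Lam -> R)) : B `<=` den_range P -> B !=set0 ->
  (exists r : R, forall x, B x -> l2norm x <= r) ->
  forall z, in_l2 z ->
  (fun a => ereal_sup [set (l2inner (l2sub (P a x) x) z)%:E | x in B])
    @ 0^'+ --> 0%E.
Proof.
move=> HB [x0 Bx0] [r hr] z hz.
have inB : forall x, B x -> in_l2 x by move=> x /HB /range_l2.
have r0 : 0 <= r by apply: le_trans (hr _ Bx0); exact: l2norm_ge0.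
apply: cvg0_ereal => e e0.
set d := e / (r ^+ 2 + 1).
have d0 : 0 < d by apply: divr_gt0 => //; have := sqr_ge0 r; lra.
have eta0 : 0 < d * e / 2 by apply: divr_gt0 => //; apply: mulr_gt0.
have [F [finF hF]] := @tail _ _ (fun l => z l ^+ 2) _ (fun l => sqr_ge0 (z l)) hz eta0.
have e40 : 0 < e / 4 by apply: divr_gt0 => //; lra.
have hb := @near_scale (fun a l => Eb a l r) (fun l => `|z l|)
  (fun l => normr_ge0 (z l)) (fun l e' he' => Eb_cvg l r e' he').
have hN := near_sum (fun a l => `|z l| * Eb a l r) _ finF hb _ e40.
apply: filterS2 hN (@nbhs_right_gt R 0) => a h1 a0.
have key : forall x, B x -> `|l2inner (l2sub (P a x) x) z| <= e.
  move=> x Bx; have hx := inB x Bx; have hxr := hr x Bx.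
  apply: l2inner_le.
  have -> : e = e / 4 + 3 * e / 4 by field.
  apply: (@split_bound _ F _ _ finF).
  - by move=> l; exact: normr_ge0.
  - apply: le_trans _ h1; apply: lee_fsum => // l _; rewrite lee_fin /l2sub.
    have [_ d2] := d_bounds l a0 hx r0 (le_trans (coord_le l hx) hxr).
    rewrite normrM mulrC; apply: ler_wpM2l => //; exact: normr_ge0.
  - set rho := (2 * d)^-1.
    apply: (@le_trans _ _ (\esum_(l in [set: Lam] `&` ~` F)
       ((d / 2)%:E * ((x l)^+2)%:E + rho%:E * ((z l)^+2)%:E))%E).
      apply: le_esum => l _; rewrite -!EFinM -EFinD lee_fin /l2sub.
      have [d1 _] := d_bounds l a0 hx r0 (le_trans (coord_le l hx) hxr).
      rewrite normrM (sqr_abs (x l)) (sqr_abs (z l)).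
      apply: (@le_trans _ _ (`|x l| * `|z l|)); last exact: amgm.
      by apply: ler_wpM2r => //; exact: normr_ge0.
    have rho0 : 0 <= rho by rewrite /rho invr_ge0; lra.
    have d20 : 0 <= d / 2 by lra.
    rewrite esumD; first last.
    + by move=> l _; rewrite -EFinM lee_fin mulr_ge0 ?sqr_ge0.
    + by move=> l _; rewrite -EFinM lee_fin mulr_ge0 ?sqr_ge0.
    rewrite -!esumZ //; try by move=> l; rewrite lee_fin sqr_ge0.
    have hx2 : (\esum_(l in [set: Lam] `&` ~` F) ((x l)^+2)%:E <= (r ^+ 2)%:E)%E.
      apply: le_trans (@esum_sub_le (fun l => x l ^+ 2) F (fun l => sqr_ge0 (x l))) _.
      rewrite -/(l2sq x) (l2sqE hx) lee_fin.
      by rewrite ler_pXn2r ?nnegrE ?l2norm_ge0.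
    apply: (@le_trans _ _ ((d / 2)%:E * (r ^+ 2)%:E + rho%:E * (d * e / 2)%:E)%E).
      by apply: leeD; apply: lee_wpmul2l => //; rewrite lee_fin.
    rewrite -!EFinM -EFinD lee_fin.
    have -> : rho * (d * e / 2) = e / 4 by rewrite /rho; field; rewrite gt_eqF.
    have : d * r ^+ 2 <= e.
      rewrite /d mulrAC ler_pdivrMr; last by have := sqr_ge0 r; lra.
      have := sqr_ge0 r; nra.
    lra.
apply/andP; split.
  apply: le_trans (ereal_sup_ubound _); last by exists x0.
  by rewrite lee_fin; have := key x0 Bx0; rewrite ler_norml => /andP[].
apply: ge_ereal_sup => _ [x Bx <-]; rewrite lee_fin.
by have := key x Bx; rewrite ler_norml => /andP[].
Qed.

Lemma admissible : admissible_denoisers P.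
Proof.
split; first by move=> a a0 x hx; exact: Pl2.
split; first exact: D1.
split; first exact: D2.
split; first exact: D3.
exact: D4.
Qed.
End Adm.
End Main.

Theorem lemma5p3 (R : realType) (Lam : countType)
  (kappa : Lam -> R) (phi : R -> R -> R -> R) (s : R -> Lam -> R -> \bar R)
  (gamma : R) (ell : R -> R) :
  (* kappa in (0,oo)^Lam, sup kappa < oo *)
  (forall l, 0 < kappa l) ->
  (exists K : R, forall l, kappa l <= K) ->
  (* non-linear regularizing filter *)
  nl_reg_filter phi ->
  (* kappa-regularizer *)
  (forall a, 0 < a -> forall l,
     eproper (s a l) /\ econvex (s a l) /\ elsc (s a l) /\
     (forall x : R, (s a l 0%R <= s a l x)%E) /\ s a l 0%R = 0%E /\
     is_prox1 (s a l) (phi a (kappa l))) ->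
  (* Assumption C *)
  0 < gamma ->
  gamma < (sup (range (fun l => kappa l ^+ 2)))^-1 ->
  (forall a, 0 < a -> 0 < ell a < 1) ->
  (forall a, 0 < a -> forall l, forall x y,
     `|phi a (kappa l) x - phi a (kappa l) y|
       <= gamma * kappa l ^+ 2 * ell a
          / (1 - ell a * (1 - gamma * kappa l ^+ 2)) * `|x - y|) ->
  (exists C : R, 1 <= C /\
     forall a, 0 < a -> C <= (1 - ell a)^-1 -> forall l x,
       gamma * kappa l ^+ 2 * (1 - C * (1 - ell a))
         / (1 - (1 - C * (1 - ell a)) * (1 - gamma * kappa l ^+ 2)) * `|x|
       <= `|phi a (kappa l) x|) ->
  (* conclusion: prox_{gamma R_alpha} exists and is an admissible family *)
  (forall a, 0 < a -> exists P,
     is_prox_l2 (fun x => (gamma%:E * kappa_reg s kappa a x)%E) P) /\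
  (forall P : R -> (Lam -> R) -> (Lam -> R),
     (forall a, 0 < a ->
        is_prox_l2 (fun x => (gamma%:E * kappa_reg s kappa a x)%E) (P a)) ->
     admissible_denoisers P).
Proof.
move=> kpos [K hK] filt sreg gpos gsup ellb HC1 [C [C1 HC2]].
have tl : forall l, 0 < gamma * kappa l ^+ 2 < 1.
  move=> l; apply/andP; split; first by apply: mulr_gt0 => //; apply: exprn_gt0.
  set S := range (fun l => kappa l ^+ 2).
  have hub : has_ubound S.
    exists (K ^+ 2) => _ [l' _ <-].
    have k0 := kpos l'; have := hK l'; nra.
  have hl : kappa l ^+ 2 <= sup S by apply: ub_le_sup => //; exists l.
  have k2 : 0 < kappa l ^+ 2 by apply: exprn_gt0.
  have S0 : 0 < sup S by apply: lt_le_trans k2 hl.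
  have : gamma * sup S < 1 by rewrite -ltr_pdivlMr // div1r.
  have : gamma * kappa l ^+ 2 <= gamma * sup S by rewrite ler_pM2l.
  lra.
split.
  by move=> a a0; exact: (prox_exists kappa phi s gamma kpos tl gpos filt sreg a a0).
move=> P HP.
exact: (admissible kappa phi s gamma ell C kpos tl gpos filt sreg ellb HC1 C1 HC2 P HP).
Qed.
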